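(* Let $F$ be a totally real number field, $D$ a totally definite quaternion $F$-algebra, and $\mathcal O$ an $O_F$-order in $D$. If $[P]\in\mathrm{Picent}(\mathcal O)$ is not in the kernel of $\mathrm{Nr}:\mathrm{Picent}(\mathcal O)\to\mathrm{Cl}^+(O_F)$, then $\mathrm{Cl}(\mathcal O)^{[P]}=\emptyset$.
   Context: $\mathrm{Cl}(\mathcal O)$ is the set of classes of locally principal fractional right $\mathcal O$-ideals modulo left multiplication by $D^\times$. $\mathrm{Picent}(\mathcal O)$ is the group of invertible two-sided fractional $\mathcal O$-ideals modulo $\{a\mathcal O:a\in F^\times\}$; it acts on $\mathrm{Cl}(\mathcal O)$ by $([I],[P])\mapsto[IP]$, and $\mathrm{Cl}(\mathcal O)^{[P]}$ is the set of fixed points of $[P]$. The map $\mathrm{Nr}$ sends $[P]$ to the narrow ideal class of the reduced norm $\mathrm{Nr}(P)$ (the fractional $O_F$-ideal generated by reduced norms of elements of $P$) in the narrow class group $\mathrm{Cl}^+(O_F)$. *)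

(* Defs.v *)
From HB Require Import structures.
From mathcomp Require Import all_boot all_order all_algebra all_field.
Set Implicit Arguments. Unset Strict Implicit. Unset Printing Implicit Defensive.
Import Order.TTheory GRing.Theory Num.Theory.
Local Open Scope ring_scope.

Definition seteq (T : Type) (A B : T -> Prop) : Prop := forall x, A x <-> B x.

Section NumberField.
Variable F : fieldType.

Definition OF_int (x : F) : Prop :=
  exists p : {poly int}, p \is monic /\ root (map_poly (fun z : int => z%:~R) p) x.

Definition totally_real : Prop :=
  forall (s : {rmorphism F -> algC}) (x : F), s x \is Num.real.

Definition totally_positive (c : F) : Prop :=
  forall s : {rmorphism F -> algC}, 0 < s c.

Definition OF_prime (p : F -> Prop) : Prop :=
  [/\ (forall x, p x -> OF_int x), p 0,
      (forall x y, p x -> p y -> p (x - y)),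
      (forall r x, OF_int r -> p x -> p (r * x)) &
  [/\ ~ p 1,
      (forall x y, OF_int x -> OF_int y -> p (x * y) -> p x \/ p y) &
      exists x, p x /\ x != 0]].

Definition principal_OF (c : F) : F -> Prop := fun y => exists r, OF_int r /\ y = c * r.

Definition narrow_trivial (J : F -> Prop) : Prop :=
  exists c : F, c != 0 /\ totally_positive c /\ seteq J (principal_OF c).

End NumberField.

Section Quaternion.
Variables (F : fieldType) (D : falgType F).

Definition qbasis (i j : D) : 4.-tuple D := [tuple 1; i; j; i * j].

Definition quaternion_data (a b : F) (i j : D) : Prop :=
  [/\ a != 0, b != 0, i * i = a%:A, j * j = b%:A &
      i * j = - (j * i) /\ basis_of fullv (qbasis i j)].

(* totally definite: D ⊗_σ R is the Hamilton quaternions for every real place σ,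
   i.e. σ(a) < 0 and σ(b) < 0 *)
Definition totally_definite (a b : F) : Prop :=
  forall s : {rmorphism F -> algC}, s a < 0 /\ s b < 0.

Definition nrd (a b : F) (i j : D) (x : D) : F :=
  let c k := coord (qbasis i j) (inord k) x in
  c 0%N ^+ 2 - a * c 1%N ^+ 2 - b * c 2%N ^+ 2 + a * b * c 3%N ^+ 2.

Definition lattice (I : D -> Prop) : Prop :=
  exists (n : nat) (g : 'I_n -> D),
    seteq I (fun y => exists c : 'I_n -> F,
                (forall k, OF_int (c k)) /\ y = \sum_(k < n) c k *: g k)
    /\ <<[seq g k | k : 'I_n]>>%VS = fullv.

Definition prodS (I J : D -> Prop) : D -> Prop :=
  fun y => exists (n : nat) (x z : 'I_n -> D),
    (forall k, I (x k) /\ J (z k)) /\ y = \sum_(k < n) x k * z k.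

Definition lmulS (alpha : D) (I : D -> Prop) : D -> Prop :=
  fun y => exists x, I x /\ y = alpha * x.

Definition OF_order (O : D -> Prop) : Prop :=
  [/\ lattice O, O 1 & forall x y, O x -> O y -> O (x * y)].

Definition right_frac_ideal (O I : D -> Prop) : Prop :=
  lattice I /\ forall x y, I x -> O y -> I (x * y).

Definition loc (p : F -> Prop) (M : D -> Prop) : D -> Prop :=
  fun x => exists m s, [/\ M m, OF_int s, ~ p s & x = s^-1 *: m].

Definition locally_principal_right (O I : D -> Prop) : Prop :=
  right_frac_ideal O I /\
  forall p, OF_prime p -> exists alpha : D,
    alpha \is a GRing.unit /\ seteq (loc p I) (lmulS alpha (loc p O)).

Definition invertible_twosided (O P : D -> Prop) : Prop :=
  [/\ lattice P, (forall x y, O x -> P y -> P (x * y)),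
      (forall x y, P x -> O y -> P (x * y)) &
      exists Q, lattice Q /\ seteq (prodS P Q) O /\ seteq (prodS Q P) O].

Definition NrS (a b : F) (i j : D) (P : D -> Prop) : F -> Prop :=
  fun y => exists (n : nat) (c : 'I_n -> F) (g : 'I_n -> D),
    [/\ forall k, OF_int (c k), forall k, P (g k) &
        y = \sum_(k < n) c k * nrd a b i j (g k)].

(* [I] is fixed by [P] in Cl(O): [IP] = [I], i.e. IP = alpha I, alpha in D^x *)
Definition class_fixed (I P : D -> Prop) : Prop :=
  exists alpha : D, alpha \is a GRing.unit /\ seteq (prodS I P) (lmulS alpha I).

End Quaternion.

(* Main.v *)
Require Import Defs.
From HB Require Import structures.
From mathcomp Require Import all_boot all_order all_algebra all_field.
Local Open Scope ring_scope.
From mathcomp Require Import ring zify.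
From mathcomp Require Import boolp classical_sets.
Set Implicit Arguments. Unset Strict Implicit. Unset Printing Implicit Defensive.
Import Order.TTheory GRing.Theory Num.Theory.
Local Open Scope ring_scope.

Section Quat.
Variables (F : fieldType) (D : falgType F) (a b : F) (i j : D).
Hypothesis Hq : quaternion_data a b i j.

Definition cf (x : D) (n : nat) : F := coord (qbasis i j) (inord n) x.

Lemma nrdE x : nrd a b i j x =
  cf x 0 ^+ 2 - a * cf x 1 ^+ 2 - b * cf x 2 ^+ 2 + a * b * cf x 3 ^+ 2.
Proof. by []. Qed.

Lemma q_free : free (qbasis i j).
Proof. by case: Hq => _ _ _ _ [_ /basis_free]. Qed.

Lemma cfX m n : (m < 4)%N -> (n < 4)%N -> cf ((qbasis i j)`_m) n = (m == n)%:R.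
Proof.
move=> hm hn; have := coord_free (inord m : 'I_4) (inord n) q_free.
rewrite /cf inordK // => ->; by rewrite -val_eqE /= !inordK.
Qed.

Lemma cf1 n : (n < 4)%N -> cf 1 n = (0 == n)%:R.
Proof. by move=> hn; rewrite -(cfX _ hn). Qed.
Lemma cfi n : (n < 4)%N -> cf i n = (1 == n)%:R.
Proof. by move=> hn; rewrite -(cfX _ hn). Qed.
Lemma cfj n : (n < 4)%N -> cf j n = (2 == n)%:R.
Proof. by move=> hn; rewrite -(cfX _ hn). Qed.
Lemma cfk n : (n < 4)%N -> cf (i * j) n = (3 == n)%:R.
Proof. by move=> hn; rewrite -(cfX _ hn). Qed.

Lemma cfD x y n : cf (x + y) n = cf x n + cf y n.
Proof. by rewrite /cf linearD. Qed.
Lemma cfZ c x n : cf (c *: x) n = c * cf x n.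
Proof. by rewrite /cf linearZ. Qed.
Lemma cfN x n : cf (- x) n = - cf x n.
Proof. by rewrite /cf linearN. Qed.
Lemma cfB x y n : cf (x - y) n = cf x n - cf y n.
Proof. by rewrite /cf linearB. Qed.
Lemma cf0 n : cf 0 n = 0.
Proof. by rewrite /cf linear0. Qed.

Lemma decomp x : x = cf x 0 *: 1 + cf x 1 *: i + cf x 2 *: j + cf x 3 *: (i * j).
Proof.
case: Hq => _ _ _ _ [_ hb].
rewrite {1}(coord_basis hb (memvf x)).
rewrite (eq_bigr (fun l : 'I_4 => cf x l *: (qbasis i j)`_l)); last first.
  by move=> l _; rewrite /cf inord_val.
by rewrite !big_ord_recl big_ord0 addr0 /= !addrA.
Qed.

Lemma ii : i * i = a%:A. Proof. by case: Hq. Qed.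
Lemma jj : j * j = b%:A. Proof. by case: Hq. Qed.
Lemma ji : j * i = - (i * j).
Proof. by case: Hq => _ _ _ _ [-> _]; rewrite opprK. Qed.
Lemma ik : i * (i * j) = a *: j.
Proof. by rewrite mulrA ii -scalerAl mul1r. Qed.
Lemma ki : (i * j) * i = - (a *: j).
Proof. by rewrite -mulrA ji mulrN mulrA ii -scalerAl mul1r. Qed.
Lemma jk : j * (i * j) = - (b *: i).
Proof. by rewrite mulrA ji mulNr -mulrA jj -scalerAr mulr1. Qed.
Lemma kj : (i * j) * j = b *: i.
Proof. by rewrite -mulrA jj -scalerAr mulr1. Qed.
Lemma kk : (i * j) * (i * j) = - (a * b)%:A.
Proof. by rewrite mulrA ki mulNr -scalerAl jj scalerA. Qed.

Lemma cf_mul x y n : (n < 4)%N -> cf (x * y) n =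
  (cf x 0 * cf y 0 + a * cf x 1 * cf y 1 + b * cf x 2 * cf y 2 - a * b * cf x 3 * cf y 3) * (0 == n)%:R
+ (cf x 0 * cf y 1 + cf x 1 * cf y 0 - b * cf x 2 * cf y 3 + b * cf x 3 * cf y 2) * (1 == n)%:R
+ (cf x 0 * cf y 2 + cf x 2 * cf y 0 + a * cf x 1 * cf y 3 - a * cf x 3 * cf y 1) * (2 == n)%:R
+ (cf x 0 * cf y 3 + cf x 3 * cf y 0 + cf x 1 * cf y 2 - cf x 2 * cf y 1) * (3 == n)%:R.
Proof.
move=> hn.
rewrite {1}[x]decomp {1}[y]decomp.
rewrite !mulrDl !mulrDr -!scalerAl -!scalerAr !mul1r !mulr1 !scalerA.
rewrite ii jj ji ik ki jk kj kk.
rewrite !cfD !cfZ !cfN !cfZ cf1 // cfi // cfj // cfk //.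
move: (0 == n) (1 == n) (2 == n) (3 == n) => e0 e1 e2 e3; ring.
Qed.


Lemma cf_eq0 x : (forall n, (n < 4)%N -> cf x n = 0) -> x = 0.
Proof.
move=> h; rewrite [x]decomp !h // !scale0r !addr0 //.
Qed.

Lemma nrd_mul x y : nrd a b i j (x * y) = nrd a b i j x * nrd a b i j y.
Proof. rewrite !nrdE !cf_mul //=; ring. Qed.

Lemma nrdZ c x : nrd a b i j (c *: x) = c ^+ 2 * nrd a b i j x.
Proof. rewrite !nrdE !cfZ; ring. Qed.

Lemma nrd1 : nrd a b i j 1 = 1.
Proof. rewrite !nrdE !cf1 //=; ring. Qed.

Lemma nrd_quad x : x * x - (2 * cf x 0) *: x + (nrd a b i j x)%:A = 0.
Proof.
apply: cf_eq0 => n hn; rewrite !cfD cfN !cfZ cf_mul // cf1 // nrdE.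
by case: n hn => [|[|[|[|n]]]] //= _; ring.
Qed.


End Quat.
Section Pos.
Variables (F : fieldType) (D : falgType F) (a b : F) (i j : D).
Hypothesis Hq : quaternion_data a b i j.

Lemma nrd_pos (s : {rmorphism F -> algC}) x :
  s a < 0 -> s b < 0 -> (forall y, s y \is Num.real) -> x != 0 ->
  0 < s (nrd a b i j x).
Proof.
move=> ha hb hr hx.
have sq y : 0 <= s y ^+ 2 by rewrite -realEsqr.
have h1 : 0 <= - s a by rewrite oppr_ge0 ltW.
have h2 : 0 <= - s b by rewrite oppr_ge0 ltW.
have h3 : 0 <= s a * s b by rewrite -mulrNN mulr_ge0.
rewrite nrdE !rmorphD !rmorphN !rmorphM -!expr2.
set c0 := s (cf _ _ _ 0); set c1 := s (cf _ _ _ 1); set c2 := s (cf _ _ _ 2); set c3 := s (cf _ _ _ 3).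
have e : s (a) * s (b) * c3 ^+ 2 + (-(s a) * c1 ^+2 + (- (s b) * c2 ^+ 2 + c0 ^+ 2)) =
   c0 ^+ 2 - s a * c1 ^+ 2 - s b * c2 ^+ 2 + s a * s b * c3 ^+ 2 by ring.
rewrite -e.
have t0 : 0 <= c0 ^+ 2 by apply: sq.
have t1 : 0 <= - s a * c1 ^+ 2 by rewrite mulr_ge0 // sq.
have t2 : 0 <= - s b * c2 ^+ 2 by rewrite mulr_ge0 // sq.
have t3 : 0 <= s a * s b * c3 ^+ 2 by rewrite mulr_ge0 // sq.
rewrite lt_def !addr_ge0 // andbT.
rewrite !paddr_eq0 ?addr_ge0 //.
rewrite !mulf_eq0 !oppr_eq0 (lt_eqF ha) (lt_eqF hb) !orbb /= /c0 /c1 /c2 /c3 !fmorph_eq0.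
apply: contra hx => /and4P [/eqP e3 /eqP e1 /eqP e2 /eqP e0].
apply/eqP; apply: (cf_eq0 Hq) => n hn.
by case: n hn => [|[|[|[|n]]]] //= _.
Qed.
End Pos.

Section Int.
Variable F : fieldType.

Lemma OF_intP (x : F) : OF_int x <-> integralOver intr x.
Proof. by split=> [[p [mp rp]]|[p mp rp]]; [exists p | exists p]. Qed.

Lemma integral_map (K : nzRingType) (f : {rmorphism F -> K}) (x : F) :
  integralOver (intr : int -> F) x -> integralOver (intr : int -> K) (f x).
Proof.
case=> p mp rp; exists p => //.
have -> : map_poly intr p = map_poly f (map_poly (intr : int -> F) p).
  by rewrite -map_poly_comp; apply: eq_map_poly => z /=; rewrite rmorph_int.
by rewrite /root horner_map (eqP rp) rmorph0.
Qed.

Lemma integral_inj (K : nzRingType) (f : {rmorphism F -> K}) (x : F) :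
  integralOver (intr : int -> K) (f x) -> integralOver (intr : int -> F) x.
Proof.
case=> p mp rp; exists p => //.
have e : map_poly intr p = map_poly f (map_poly (intr : int -> F) p).
  by rewrite -map_poly_comp; apply: eq_map_poly => z /=; rewrite rmorph_int.
by rewrite e /root horner_map fmorph_eq0 in rp.
Qed.

Definition OFb : {pred F} := fun x => `[< OF_int x >].

Lemma OFbP x : reflect (OF_int x) (x \in OFb).
Proof. by rewrite unfold_in; apply: asboolP. Qed.

Lemma OFbE x : (x \in OFb) <-> integralOver (intr : int -> F) x.
Proof. by rewrite -OF_intP; split => /OFbP. Qed.

Fact OFb_subring : subring_closed OFb.
Proof.
split.
- by apply/OFbE; apply: integral1.
- by move=> x y /OFbE hx /OFbE hy; apply/OFbE; apply: integral_sub.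
- by move=> x y /OFbE hx /OFbE hy; apply/OFbE; apply: integral_mul.
Qed.

HB.instance Definition _ := GRing.isSubringClosed.Build F OFb OFb_subring.

Lemma OF_root_monic (p : {poly F}) x : p \is monic -> p \is a polyOver OFb ->
  root p x -> OF_int x.
Proof.
move=> mp /polyOverP op rp; apply/OF_intP.
apply: integral_root_monic mp rp _ => z /(nthP 0) [k _ <-].
by apply/OFbE.
Qed.

End Int.
Arguments OFb {F}.

Section Det.
Variables (F : fieldType) (D : falgType F).

Definition comb n (g : 'I_n -> D) : D -> Prop := fun y => exists c : 'I_n -> F,
                (forall k, OF_int (c k)) /\ y = \sum_(k < n) c k *: g k.

Lemma comb_gen n (g : 'I_n -> D) k : comb g (g k).
Proof.
exists (fun l => (k == l)%:R); split.
  by move=> l; apply/OFbP; case: (k == l); rewrite ?rpred1 ?rpred0.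
rewrite (bigD1 k) //= eqxx scale1r big1 ?addr0 // => l /negbTE.
by rewrite eq_sym => ->; rewrite scale0r.
Qed.

Lemma char_poly_over n (M : 'M[F]_n) : (forall k l, M k l \in OFb) ->
  char_poly M \is a polyOver OFb.
Proof.
move=> hM; rewrite /char_poly /determinant.
apply: rpred_sum => s _; apply: rpredM; first exact: rpred_sign.
apply: rpred_prod => k _; rewrite !mxE.
apply: rpredB; last by rewrite polyOverC.
by apply: rpredMn; apply: polyOverX.
Qed.

Lemma order_integral n (g : 'I_n -> D) (O : D -> Prop) o :
  seteq O (comb g) -> O 1 -> (forall x y, O x -> O y -> O (x * y)) -> O o ->
  exists p : {poly F}, [/\ p \is monic, p \is a polyOver OFb & horner_alg o p = 0].
Proof.
move=> hO h1 hM ho.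
have hk : forall k, exists c : 'I_n -> F,
    (forall l, OF_int (c l)) /\ o * g k = \sum_(l < n) c l *: g l.
  by move=> k; apply/hO/hM => //; apply/hO/comb_gen.
have [C hC] := choice hk.
case: n g hO hk C hC => [|n] g hO hk C hC.
  have := h1; move/hO => [d [_ e]]; move: e; rewrite big_ord0 => /eqP.
  by rewrite oner_eq0.
pose M := \matrix_(k, l) C k l.
have key : forall r : {poly F}, forall k,
    horner_alg o r * g k = \sum_(l < n.+1) (horner_mx M r) k l *: g l.
  elim/poly_ind => [|r c IH] k.
    by rewrite !rmorph0 mul0r big1 // => l _; rewrite mxE scale0r.
  rewrite rmorphD rmorphM /= horner_algX horner_algC mulrDl -mulrA.
  rewrite [r * 'X]mulrC.
  rewrite (proj2 (hC k)) mulr_sumr.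
  rewrite (eq_bigr (fun l => C k l *: \sum_(m < n.+1) horner_mx M r l m *: g m)); last first.
    by move=> l _; rewrite -scalerAr IH.
  rewrite rmorphD rmorphM /= horner_mx_X horner_mx_C.
  rewrite -scalerAl mul1r.
  under eq_bigr do rewrite scaler_sumr.
  rewrite exchange_big /=.
  rewrite [in RHS](eq_bigr (fun m => (\sum_l C k l * horner_mx M r l m) *: g m
       + (c * (k == m)%:R) *: g m)); last first.
    by move=> m _; rewrite !mxE scalerDl mulr_natr; congr (_ *: _ + _); apply: eq_bigr => l _; rewrite mxE.
  rewrite big_split /=; congr (_ + _).
    by apply: eq_bigr => m _; rewrite scaler_suml; apply: eq_bigr => l _; rewrite scalerA.
  rewrite (bigD1 k) //= eqxx mulr1 big1 ?addr0 // => m /negbTE.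
  by rewrite eq_sym => ->; rewrite mulr0 scale0r.
exists (char_poly M); split; first exact: char_poly_monic.
  by apply: char_poly_over => k l; rewrite mxE; apply/OFbP; apply: (proj1 (hC k)).
have z : forall k, horner_alg o (char_poly M) * g k = 0.
  by move=> k; rewrite key Cayley_Hamilton big1 // => l _; rewrite mxE scale0r.
have [d [_ e1]] := (hO 1).1 h1.
by rewrite -[LHS]mulr1 e1 mulr_sumr big1 // => k _; rewrite -scalerAr z scaler0.
Qed.
End Det.

Section NrdInt.
Variables (F : fieldType) (D : falgType F) (a b : F) (i j : D).
Hypothesis Hq : quaternion_data a b i j.

Lemma horner_alg_scal (c : F) (p : {poly F}) :
  horner_alg (c%:A : D) p = (p.[c])%:A.
Proof.
elim/poly_ind: p => [|p d IH]; first by rewrite !rmorph0 horner0 scale0r.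
rewrite rmorphD rmorphM /= horner_algX horner_algC IH hornerE.
by rewrite !hornerE scalerDl -scalerAl mul1r scalerA.
Qed.

Lemma in_alg_eq0 (c : F) : ((c%:A : D) == 0) = (c == 0).
Proof. by rewrite scaler_eq0 oner_eq0 orbF. Qed.

Lemma quad_integral (p : {poly F}) (c0 n : F) :
  p \is monic -> p \is a polyOver OFb ->
  ('X^2 - (2 * c0) *: 'X + n%:P) %| p -> OF_int n.
Proof.
move=> mp op dq.
set q := 'X^2 - (2 * c0) *: 'X + n%:P.
have sl : (size ((- ((2 * c0) *: 'X) + n%:P)%R : {poly F}) < size ('X^2 : {poly F}))%N.
  rewrite size_polyXn; apply: (leq_ltn_trans (size_add _ _)).
  rewrite gtn_max size_opp (leq_ltn_trans (size_scale_leq _ _)) ?size_polyX //.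
  by rewrite (leq_ltn_trans (size_polyC_leq1 _)).
have sq : size q = 3 by rewrite /q -addrA size_addl // size_polyXn.
have mq : q \is monic by rewrite monicE /q -addrA lead_coefDl // lead_coefXn.
have mk : mk_monic q = q by rewrite /mk_monic sq mq.
have small (c : F) : in_qpoly q c%:P = qpolyC q c.
  apply/val_inj; change (polyn (in_qpoly q c%:P) = c%:P).
  rewrite in_qpoly_small // mk sq.
  exact: (leq_ltn_trans (size_polyC_leq1 _)).
have inq0 : in_qpoly q q = 0.
  apply/val_inj; change (Pdiv.Ring.rmodp q (mk_monic q) = 0); rewrite mk Pdiv.Ring.rmodpp //; exact: mulrC.
have eh : p = p %/ q * q by rewrite divpK.
have qt t : q \Po t = q -> in_qpoly q (p \Po t) = 0.
  by move=> et; rewrite eh comp_polyM et rmorphM /= inq0 mulr0.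
have ev t : (map_poly (qpolyC q) p).[in_qpoly q t] = in_qpoly q (p \Po t).
  rewrite /comp_poly -horner_map /= -map_poly_comp; congr (_.[_]).
  by apply: eq_map_poly => c /=; rewrite small.
have intP : forall t, q \Po t = q -> integralOver (intr : int -> {poly %/ q}) (in_qpoly q t).
  move=> t et; apply: (@integral_root_monic _ _ _ _ (map_poly (qpolyC q) p)).
  - exact: monic_map.
  - by rewrite /root ev qt.
  - move=> z /(nthP 0) [k _ <-]; rewrite coef_map /=.
    apply: integral_map; apply/OFbE; exact: (polyOverP op).
have e1 : q \Po 'X = q by rewrite comp_polyXr.
have e2 : q \Po ((2 * c0)%:P - 'X) = q.
  rewrite /q -['X^2]/('X * 'X) comp_polyD comp_polyB comp_polyM comp_polyZ comp_polyC comp_polyX.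
  rewrite -!mul_polyC polyCM; ring.
have := integral_mul (intP _ e1) (intP _ e2).
rewrite -rmorphM.
have -> : ('X * ((2 * c0)%:P - 'X) : {poly F}) = n%:P - q.
  rewrite /q -['X^2]/('X * 'X) -!mul_polyC polyCM; ring.
rewrite rmorphB /= inq0 subr0 small => /integral_inj.
by move/OF_intP.
Qed.

Lemma nrd_integral o (p : {poly F}) : p \is monic -> p \is a polyOver OFb ->
  horner_alg o p = 0 -> OF_int (nrd a b i j o).
Proof.
move=> mp op hp.
case: (boolP [&& cf i j o 1 == 0, cf i j o 2 == 0 & cf i j o 3 == 0]) =>
   [/and3P [/eqP h1 /eqP h2 /eqP h3] | hne].
  have eo : o = (cf i j o 0)%:A by rewrite {1}[o](decomp Hq) h1 h2 h3 !scale0r !addr0.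
  rewrite {1}eo horner_alg_scal in hp; move/eqP: hp; rewrite in_alg_eq0 => r0.
  have ic : OF_int (cf i j o 0) by apply: (OF_root_monic mp op).
  rewrite nrdE h1 h2 h3.
  have -> : cf i j o 0 ^+ 2 - a * 0 ^+ 2 - b * 0 ^+ 2 + a * b * 0 ^+ 2 = cf i j o 0 ^+ 2 by ring.
  by apply/OFbP; apply: rpredX; apply/OFbP.
apply: (quad_integral (c0 := cf i j o 0) mp op).
set q := 'X^2 - _ *: 'X + _.
have hq : horner_alg o q = 0.
  rewrite /q rmorphD rmorphB /= linearZ /= rmorphXn /= horner_algX horner_algC expr2.
  rewrite mulr_algl; exact: (nrd_quad Hq).
have sq : (size q = 3)%N.
  rewrite /q -addrA size_addl ?size_polyXn //; apply: (leq_ltn_trans (size_add _ _)).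
  rewrite gtn_max size_opp (leq_ltn_trans (size_scale_leq _ _)) ?size_polyX //.
  by rewrite (leq_ltn_trans (size_polyC_leq1 _)).
have qn0 : q != 0 by rewrite -size_poly_eq0 sq.
set r := p %% q.
have hr : horner_alg o r = 0.
  move: hp; rewrite {1}(divp_eq p q) rmorphD rmorphM /= hq mulr0 add0r.
  by [].
have sr : (size r <= 2)%N by rewrite -ltnS -sq ltn_modp.
have er : r = r`_1 *: 'X + (r`_0)%:P.
  apply/polyP => k; rewrite coefD coefZ coefX coefC.
  case: k => [|[|k]] /=; rewrite ?mulr0 ?mulr1 ?add0r ?addr0 //.
  by rewrite nth_default // (leq_trans sr).
move: hr; rewrite er -mul_polyC rmorphD rmorphM /= !horner_algC horner_algX mulr_algl => hr.
have c m : (m < 4)%N -> r`_1 * cf i j o m + r`_0 * (0 == m)%:R = 0.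
  move=> hm; rewrite -(cf1 Hq hm) -(cfZ i j) -(cfZ i j) -cfD hr; exact: cf0.
have r1 : r`_1 = 0.
  move: hne; rewrite !negb_and => /or3P [] hn.
  - by move: (c 1%N isT); rewrite /= mulr0 addr0 => /eqP; rewrite mulf_eq0 (negbTE hn) orbF => /eqP.
  - by move: (c 2%N isT); rewrite /= mulr0 addr0 => /eqP; rewrite mulf_eq0 (negbTE hn) orbF => /eqP.
  - by move: (c 3%N isT); rewrite /= mulr0 addr0 => /eqP; rewrite mulf_eq0 (negbTE hn) orbF => /eqP.
have r0 : r`_0 = 0 by move: (c 0%N isT); rewrite r1 /= mul0r add0r mulr1.
by rewrite /dvdp -/r er r1 r0 scale0r add0r.
Qed.
End NrdInt.

Section MaxIdeal.
Variable F : fieldType.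
Hypothesis two_neq0 : (2 : F) != 0.
Hypothesis half_not_int : ~ OF_int (2^-1 : F).

Definition OFideal (J : F -> Prop) :=
  [/\ (forall x, J x -> OF_int x), J 0, (forall x y, J x -> J y -> J (x - y))
    & (forall r x, OF_int r -> J x -> J (r * x))].

Lemma oi0 : OF_int (0 : F). Proof. by apply/OFbP; rewrite rpred0. Qed.
Lemma oi1 : OF_int (1 : F). Proof. by apply/OFbP; rewrite rpred1. Qed.
Lemma oiD (x y : F) : OF_int x -> OF_int y -> OF_int (x + y).
Proof. by move=> /OFbP hx /OFbP hy; apply/OFbP; rewrite rpredD. Qed.
Lemma oiB (x y : F) : OF_int x -> OF_int y -> OF_int (x - y).
Proof. by move=> /OFbP hx /OFbP hy; apply/OFbP; rewrite rpredB. Qed.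
Lemma oiN (x : F) : OF_int x -> OF_int (- x).
Proof. by move=> /OFbP hx; apply/OFbP; rewrite rpredN. Qed.
Lemma oiM (x y : F) : OF_int x -> OF_int y -> OF_int (x * y).
Proof. by move=> /OFbP hx /OFbP hy; apply/OFbP; rewrite rpredM. Qed.

Lemma idealD J x y : OFideal J -> J x -> J y -> J (x + y).
Proof.
move=> hJ hx hy; case: hJ => H1 H0 hsub H4; rewrite -[y]opprK; apply: (hsub) => //; rewrite -sub0r; exact: (hsub).
Qed.

Definition addid (A : F -> Prop) x : F -> Prop :=
  fun z => exists m r, [/\ A m, OF_int r & z = m + r * x].

Lemma addid_ideal A x : OFideal A -> OF_int x -> OFideal (addid A x).
Proof.
move=> hA hx; have [h1 h2 h3 h4] := hA; split.
- by move=> z [m [r [hm hr ->]]]; apply: oiD; [exact: h1 | exact: oiM].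
- by exists 0, 0; split; rewrite ?mul0r ?addr0 //; exact: oi0.
- move=> z w [m [r [hm hr ->]]] [m' [r' [hm' hr' ->]]].
  exists (m - m'), (r - r'); split; [exact: h3 | exact: oiB |]; ring.
- move=> s z hs [m [r [hm hr ->]]]; exists (s * m), (s * r); split;
    [exact: h4 | exact: oiM |]; ring.
Qed.

Lemma addid_sub A x : OFideal A -> forall z, A z -> addid A x z.
Proof.
case=> _ _ _ _ z hz; exists z, 0; split => //; [exact: oi0 | ring].
Qed.

Lemma addid_x A x : OFideal A -> addid A x x.
Proof. by case=> _ h0 _ _; exists 0, 1; split => //; [exact: oi1 | ring]. Qed.

Lemma exists_max_ideal (J : F -> Prop) : OFideal J -> ~ J 1 ->
  exists p, OF_prime p /\ forall x, J x -> p x.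
Proof.
move=> hJ nJ1.
pose P : set (set F) := fun A => A = set0 \/ [/\ OFideal A, ~ A 1 & (J `<=` A)%classic].
have [A [PA Amax]] : exists A, P A /\ forall B, (A `<` B)%classic -> ~ P B.
  apply: Zorn_bigcup => G GP Gtot.
  have [[A0 [GA0 [x A0x]]] | hne] := pselect (exists A, G A /\ exists x, A x).
    right.
    have Gid A : G A -> (exists x, A x) -> [/\ OFideal A, ~ A 1 & (J `<=` A)%classic].
      move=> GA [y Ay]; case: (GP A GA) => // A0e; by rewrite A0e in Ay.
    have [iA0 _ JA0] := Gid A0 GA0 (ex_intro _ x A0x).
    split.
    - split.
      + by move=> z [B GB Bz]; have [[h _ _ _] _ _] := Gid B GB (ex_intro _ z Bz); exact: h.
      + by exists A0 => //; case: iA0.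
      + move=> z w [B GB Bz] [C GC Cw].
        have [BC|CB] := Gtot B C GB GC.
          have [[_ _ h _] _ _] := Gid C GC (ex_intro _ w Cw).
          by exists C => //; apply: h => //; apply: BC.
        have [[_ _ h _] _ _] := Gid B GB (ex_intro _ z Bz).
        by exists B => //; apply: h => //; apply: CB.
      + move=> r z hr [B GB Bz]; have [[_ _ _ h] _ _] := Gid B GB (ex_intro _ z Bz).
        by exists B => //; apply: h.
    - by move=> [B GB B1]; have [_ h _] := Gid B GB (ex_intro _ 1 B1).
    - by move=> z Jz; exists A0 => //; apply: JA0.
  left; apply/seteqP; split => // z [B GB Bz].
  by exfalso; apply: hne; exists B; split => //; exists z.
have [A0|[iA nA1 JA]] := PA.
  exfalso; apply: (Amax J); last by right; split => //; case: hJ.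
  rewrite A0; split => //; move=> /(_ 0); apply; by case: hJ.
have maxA x : OF_int x -> ~ A x -> addid A x 1.
  move=> hx nAx; have [h|h] := pselect (addid A x 1) => //.
  exfalso; apply: (Amax (addid A x)).
    split; first exact: addid_sub.
    by move=> /(_ x (addid_x x iA)).
  right; split; [exact: addid_ideal | exact: h |].
  by move=> z /JA; apply: addid_sub.
have [h1 h2 h3 h4] := iA.
exists A; split; last exact: JA.
split => //; split => //.
- move=> x y hx hy hxy.
  have [Ax|nAx] := pselect (A x); first by left.
  have [Ay|nAy] := pselect (A y); first by right.
  exfalso; apply: nA1.
  have [m [r [hm hr e1]]] := maxA x hx nAx.
  have [m' [r' [hm' hr' e2]]] := maxA y hy nAy.
  have -> : (1 : F) = m * m' + ((r * x) * m' + ((r' * y) * m + (r * r') * (x * y))).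
    by rewrite -[1 in LHS]mulr1 {1}e1 e2; ring.
  apply: idealD => //; first by apply: h4 => //; apply: h1.
  apply: idealD => //; first by apply: h4 => //; apply: oiM.
  apply: idealD => //; first by apply: h4 => //; apply: oiM.
  by apply: h4 => //; apply: oiM.
- have [A2|nA2] := pselect (A 2); first by exists 2.
  have two_int : OF_int (2 : F) by apply: oiD; apply: oi1.
  have [m [r [hm hr e]]] := maxA 2 two_int nA2.
  exists m; split => //; apply/eqP => m0; apply: half_not_int.
  have -> : (2^-1 : F) = r.
    by apply: (mulfI two_neq0); rewrite divff // [LHS]e m0 add0r mulrC.
  exact: hr.
Qed.
End MaxIdeal.

Section Char0.
Variable F : fieldExtType rat.

Lemma two_neq0F : (2 : F) != 0.
Proof.
have e : in_alg F (2 : rat) = 2 by rewrite rmorph_nat.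
by rewrite -e fmorph_eq0.
Qed.

Lemma half_not_intF : ~ OF_int (2^-1 : F).
Proof.
have e : in_alg F (2^-1 : rat) = 2^-1 by rewrite fmorphV rmorph_nat.
rewrite -e => /OF_intP /integral_inj /(integral_map (ratr : rat -> algC)).
case=> p mp rp.
have : ratr (2^-1 : rat) \in Aint.
  apply: (root_monic_Aint rp); first exact: monic_map.
  by apply/polyOverP => k; rewrite coef_map /= intr_int.
move/(Cint_rat_Aint (Crat_rat _)) => /intrP [m hm].
have : (2 : algC) * m%:~R = 1 by rewrite -hm fmorphV rmorph_nat mulfV // pnatr_eq0.
move=> h; have : (2 * m)%:~R = (1 : int)%:~R :> algC by rewrite intrM; exact: h.
move/intr_inj => e2; lia.
Qed.
End Char0.

Section Lat.
Variables (F : fieldType) (D : falgType F).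

Lemma comb0 n (g : 'I_n -> D) : comb g 0.
Proof.
exists (fun _ => 0); split => [k|]; first exact: oi0.
by rewrite big1 // => k _; rewrite scale0r.
Qed.

Lemma combD n (g : 'I_n -> D) x y : comb g x -> comb g y -> comb g (x + y).
Proof.
move=> [c [hc ->]] [c' [hc' ->]]; exists (fun k => c k + c' k); split.
  by move=> k; apply: oiD.
by rewrite -big_split /=; apply: eq_bigr => k _; rewrite scalerDl.
Qed.

Lemma combZ n (g : 'I_n -> D) r x : OF_int r -> comb g x -> comb g (r *: x).
Proof.
move=> hr [c [hc ->]]; exists (fun k => r * c k); split.
  by move=> k; apply: oiM.
by rewrite scaler_sumr; apply: eq_bigr => k _; rewrite scalerA.
Qed.

Definition latt (L : D -> Prop) := exists n (g : 'I_n -> D), seteq L (comb g).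

Lemma lattice_latt L : lattice L -> latt L.
Proof. by case=> n [g [h _]]; exists n, g. Qed.

Lemma lat0 L : latt L -> L 0.
Proof. by case=> n [g h]; apply/h; apply: comb0. Qed.

Lemma latD L x y : latt L -> L x -> L y -> L (x + y).
Proof. by case=> n [g h] /h hx /h hy; apply/h; apply: combD. Qed.

Lemma latZ L r x : latt L -> OF_int r -> L x -> L (r *: x).
Proof. by case=> n [g h] hr /h hx; apply/h; apply: combZ. Qed.

Lemma prime_neq0 (p : F -> Prop) s : OF_prime p -> ~ p s -> s != 0.
Proof. by case=> _ h0 _ _ _ ns; apply/eqP => s0; apply: ns; rewrite s0. Qed.

Lemma prime_mul (p : F -> Prop) s t : OF_prime p -> OF_int s -> OF_int t ->
  ~ p s -> ~ p t -> ~ p (s * t).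
Proof.
case=> _ _ _ _ [_ hpr _] hs ht ns nt pst.
by case: (hpr s t hs ht pst).
Qed.

Lemma prime_not1 (p : F -> Prop) : OF_prime p -> ~ p 1.
Proof. by case=> _ _ _ _ []. Qed.

Lemma loc_of (p : F -> Prop) (M : D -> Prop) x : OF_prime p -> M x -> loc p M x.
Proof.
move=> hp hx; exists x, 1; split => //; first exact: oi1.
  exact: prime_not1.
by rewrite invr1 scale1r.
Qed.

Lemma locD (p : F -> Prop) (M : D -> Prop) x y : OF_prime p -> latt M ->
  loc p M x -> loc p M y -> loc p M (x + y).
Proof.
move=> hp hM [m [s [hm hs ns ->]]] [m' [t [hm' ht nt ->]]].
have s0 := prime_neq0 hp ns; have t0 := prime_neq0 hp nt.
exists (t *: m + s *: m'), (s * t); split.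
- by apply: latD => //; apply: latZ.
- exact: oiM.
- exact: prime_mul.
rewrite scalerDr !scalerA; congr (_ *: m + _ *: m'); field; rewrite ?s0 ?t0 //.
Qed.

Lemma loc_sum (p : F -> Prop) (M : D -> Prop) n (f : 'I_n -> D) :
  OF_prime p -> latt M -> (forall k, loc p M (f k)) -> loc p M (\sum_(k < n) f k).
Proof.
move=> hp hM hf; apply: (big_ind (loc p M)) => //.
  by apply: loc_of => //; apply: lat0.
by move=> x y; apply: locD.
Qed.
End Lat.

Section NrSc.
Variables (F : fieldType) (D : falgType F) (a b : F) (i j : D) (P : D -> Prop).

Definition catf T n1 n2 (f1 : 'I_n1 -> T) (f2 : 'I_n2 -> T) : 'I_(n1 + n2) -> T :=
  fun k => match split k with inl k1 => f1 k1 | inr k2 => f2 k2 end.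

Lemma catfL T n1 n2 (f1 : 'I_n1 -> T) (f2 : 'I_n2 -> T) k : catf f1 f2 (lshift n2 k) = f1 k.
Proof. by rewrite /catf (unsplitK (inl _ k)). Qed.
Lemma catfR T n1 n2 (f1 : 'I_n1 -> T) (f2 : 'I_n2 -> T) k : catf f1 f2 (rshift n1 k) = f2 k.
Proof. by rewrite /catf (unsplitK (inr _ k)). Qed.

Lemma NrS0 : NrS a b i j P 0.
Proof. by exists 0%N, (fun _ => 0), (fun _ => 0); split => [[]|[]|]; rewrite // big_ord0. Qed.

Lemma NrSD x y : NrS a b i j P x -> NrS a b i j P y -> NrS a b i j P (x + y).
Proof.
move=> [n1 [c1 [g1 [hc1 hg1 ->]]]] [n2 [c2 [g2 [hc2 hg2 ->]]]].
exists (n1 + n2)%N, (catf c1 c2), (catf g1 g2); split.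
- by move=> k; rewrite /catf; case: (split k).
- by move=> k; rewrite /catf; case: (split k).
rewrite big_split_ord /=; congr (_ + _); apply: eq_bigr => k _;
  by rewrite ?catfL ?catfR.
Qed.

Lemma NrSZ r x : OF_int r -> NrS a b i j P x -> NrS a b i j P (r * x).
Proof.
move=> hr [n [c [g [hc hg ->]]]]; exists n, (fun k => r * c k), g; split => //.
  by move=> k; apply: oiM.
by rewrite mulr_sumr; apply: eq_bigr => k _; rewrite mulrA.
Qed.

Lemma NrSB x y : NrS a b i j P x -> NrS a b i j P y -> NrS a b i j P (x - y).
Proof.
move=> hx hy; apply: NrSD => //; rewrite -mulN1r; apply: NrSZ => //.
by apply: oiN; apply: oi1.
Qed.
End NrSc.

Section Main.
Variables (F : fieldType) (D : falgType F) (a b : F) (i j : D).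
Variables (O P I : D -> Prop) (alpha : D).
Hypothesis Hq : quaternion_data a b i j.
Hypothesis hO : OF_order O.
Hypothesis hP : invertible_twosided O P.
Hypothesis hI : locally_principal_right O I.
Hypothesis hau : alpha \is a GRing.unit.
Hypothesis hfix : seteq (prodS I P) (lmulS alpha I).

Local Notation nrd := (nrd a b i j).

Lemma nrd_unit u : u \is a GRing.unit -> nrd u != 0.
Proof.
move=> hu; apply/eqP => h.
have := nrd_mul Hq u u^-1; rewrite mulrV // nrd1 // h mul0r.
by apply/eqP; rewrite oner_eq0.
Qed.

Lemma nrdO_int o : O o -> OF_int (nrd o).
Proof.
move=> ho; case: hO => [[n [g [hg _]]] h1 hm].
have [p [mp op hp]] := order_integral hg h1 hm ho.
exact: (nrd_integral Hq mp op hp).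
Qed.

Lemma latP : latt P.
Proof. by case: hP => /lattice_latt. Qed.

Lemma beta_data (p : F -> Prop) : OF_prime p ->
  exists beta, [/\ beta \is a GRing.unit, seteq (loc p I) (lmulS beta (loc p O)) &
  exists x1 s1, [/\ I x1, OF_int s1, ~ p s1 & beta = s1^-1 *: x1]].
Proof.
move=> hp; have [beta [hb hloc]] := hI.2 p hp.
exists beta; split => //.
have : loc p I beta.
  apply/hloc; exists 1; split; last by rewrite mulr1.
  by apply: loc_of => //; case: hO.
by case=> x1 [s1 [h1 h2 h3 h4]]; exists x1, s1.
Qed.

Lemma local_a (p : F -> Prop) g : OF_prime p -> P g ->
  exists s, [/\ OF_int s, ~ p s & OF_int (s * (nrd g / nrd alpha))].
Proof.
move=> hp hg.
have [beta [hb hloc [x1 [s1 [Ix1 hs1 ns1 eb]]]]] := beta_data hp.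
have hxg : prodS I P (x1 * g).
  by exists 1%N, (fun _ => x1), (fun _ => g); split => [k|]; [split | rewrite big_ord1].
have [y [Iy ey]] := (hfix _).1 hxg.
have [o' [lo' eo']] := (hloc y).1 (loc_of hp Iy).
case: lo' => o0 [u [Oo0 hu nu eo0]].
have E : beta * g = s1^-1 *: (alpha * (beta * (u^-1 *: o0))).
  by rewrite -eo0 -eo' -ey eb -scalerAl.
have En := congr1 nrd E.
rewrite !nrd_mul // nrdZ // !nrd_mul // nrdZ // in En.
have s10 := prime_neq0 hp ns1; have u0 := prime_neq0 hp nu.
have nb0 := nrd_unit hb; have na0 := nrd_unit hau.
exists ((s1 * u) * (s1 * u)); split.
- by apply: oiM; apply: oiM.
- by apply: prime_mul => //; try apply: oiM => //; apply: prime_mul.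
have eg : nrd g = s1^-1 ^+ 2 * (nrd alpha * (u^-1 ^+ 2 * nrd o0)).
  apply: (mulfI nb0); rewrite En; field; rewrite ?s10 ?u0 //.
have -> : s1 * u * (s1 * u) * (nrd g / nrd alpha) = nrd o0.
  by rewrite eg; field; rewrite ?s10 ?u0 ?na0.
exact: nrdO_int.
Qed.

Lemma local_b (p : F -> Prop) : OF_prime p ->
  exists t, [/\ OF_int t, ~ p t & NrS a b i j P (t * nrd alpha)].
Proof.
move=> hp.
have [beta [hb hloc [x1 [s1 [Ix1 hs1 ns1 eb]]]]] := beta_data hp.
have hax : prodS I P (alpha * x1) by apply/hfix; exists x1.
case: hax => n [y [z [hyz e]]].
have hk : forall k, exists o, loc p O o /\ y k = beta * o.
  by move=> k; apply/hloc; apply: loc_of => //; case: (hyz k).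
have [o ho] := choice hk.
have hw : loc p P (\sum_(k < n) o k * z k).
  apply: loc_sum => // [|k]; first exact: latP.
  case: (ho k) => [[o0 [u [Oo0 hu nu eo0]]] _].
  exists (o0 * z k), u; split => //; last by rewrite eo0 -scalerAl.
  by case: hP => _ hm _ _; apply: hm => //; case: (hyz k).
case: hw => zz [v [Pzz hv nv ew]].
have E : alpha * beta = s1^-1 *: (beta * (v^-1 *: zz)).
  rewrite -ew mulr_sumr {1}eb -scalerAr e; congr (_ *: _); apply: eq_bigr => k _.
  by rewrite (proj2 (ho k)) mulrA.
have En := congr1 nrd E.
rewrite !nrd_mul // nrdZ // !nrd_mul // nrdZ // in En.
have s10 := prime_neq0 hp ns1; have v0 := prime_neq0 hp nv.
have nb0 := nrd_unit hb; have na0 := nrd_unit hau.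
exists ((s1 * v) * (s1 * v)); split.
- by apply: oiM; apply: oiM.
- by apply: prime_mul => //; try apply: oiM => //; apply: prime_mul.
have -> : s1 * v * (s1 * v) * nrd alpha = nrd zz.
  have ez : nrd zz = (s1 * v) ^+ 2 * nrd alpha.
    have h : nrd beta * ((s1 * v) ^+ 2 * nrd alpha) = (s1 * v) ^+ 2 * (nrd alpha * nrd beta) by ring.
    rewrite En in h; apply: (mulfI nb0); rewrite h; field; rewrite ?s10 ?v0 //.
  by rewrite ez; ring.
exists 1%N, (fun _ => 1), (fun _ => zz); split => //.
  by move=> _; exact: oi1.
by rewrite big_ord1 mul1r.
Qed.

Hypothesis two_neq0 : (2 : F) != 0.
Hypothesis half_not_int : ~ OF_int (2^-1 : F).

Lemma quot_int g : P g -> OF_int (nrd g / nrd alpha).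
Proof.
move=> hg; set w := nrd g / nrd alpha.
pose J := fun r => OF_int r /\ OF_int (r * w).
have hJ : OFideal J.
  split.
  - by move=> x [].
  - by split; [exact: oi0 | rewrite mul0r; exact: oi0].
  - move=> x y [hx hxw] [hy hyw]; split; first exact: oiB.
    by rewrite mulrBl; apply: oiB.
  - move=> r x hr [hx hxw]; split; first exact: oiM.
    by rewrite -mulrA; apply: oiM.
have [[_ h1]|n1] := pselect (J 1); first by rewrite mul1r in h1.
have [p [hp Jp]] := exists_max_ideal two_neq0 half_not_int hJ n1.
have [s [hs ns hsw]] := local_a hp hg.
by exfalso; apply: ns; apply: Jp.
Qed.

Lemma alpha_in : NrS a b i j P (nrd alpha).
Proof.
pose J := fun r => OF_int r /\ NrS a b i j P (r * nrd alpha).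
have hJ : OFideal J.
  split.
  - by move=> x [].
  - by split; [exact: oi0 | rewrite mul0r; exact: NrS0].
  - move=> x y [hx hxw] [hy hyw]; split; first exact: oiB.
    by rewrite mulrBl; apply: NrSB.
  - move=> r x hr [hx hxw]; split; first exact: oiM.
    by rewrite -mulrA; apply: NrSZ.
have [[_ h1]|n1] := pselect (J 1); first by rewrite mul1r in h1.
have [p [hp Jp]] := exists_max_ideal two_neq0 half_not_int hJ n1.
have [t [ht nt htw]] := local_b hp.
by exfalso; apply: nt; apply: Jp.
Qed.

Lemma NrS_principal : seteq (NrS a b i j P) (principal_OF (nrd alpha)).
Proof.
have na0 := nrd_unit hau.
move=> y; split.
  move=> [n [c [g [hc hg ->]]]].
  exists (\sum_(k < n) c k * (nrd (g k) / nrd alpha)); split.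
    apply/OFbP; apply: rpred_sum => k _; apply: rpredM; apply/OFbP => //.
    exact: quot_int.
  rewrite mulr_sumr; apply: eq_bigr => k _; field; rewrite ?na0 //.
move=> [r [hr ->]]; rewrite mulrC; apply: NrSZ => //; exact: alpha_in.
Qed.
End Main.

Unset Implicit Arguments.

Theorem lemma3p2 (F : fieldExtType rat) (D : falgType F) (a b : F) (i j : D)
    (O P : D -> Prop) :
  totally_real F ->
  quaternion_data a b i j ->
  totally_definite a b ->
  OF_order O ->
  invertible_twosided O P ->
  ~ narrow_trivial (NrS a b i j P) ->
  forall I : D -> Prop, locally_principal_right O I -> ~ class_fixed I P.
Proof.
move=> htr hq hdef hO hP hnt I hI [alpha [hau hfix]].
apply: hnt; exists (nrd a b i j alpha); split; first exact: (nrd_unit hq).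
split.
  move=> s; apply: (nrd_pos hq) => //; [exact: (hdef s).1 | exact: (hdef s).2 |].
  by apply: contraTneq hau => ->; rewrite unitr0.
exact: (NrS_principal hq hO hP hI hau hfix (two_neq0F F) (@half_not_intF F)).
Qed.
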